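(* Let $g$ be a generator satisfying (H1a) ${\rm d}P\times{\rm d}t$-a.e., for each $(y_0,z_0)\in\mathbb{R}^{1+d}$, $\lim_{(y,z)\to(y_0^-,z_0)}g(\omega,t,y,z)=g(\omega,t,y_0,z_0)$ and $\liminf_{(y,z)\to(y_0^+,z_0)}g(\omega,t,y,z)\ge g(\omega,t,y_0,z_0)$; and (H5) there are constants $C>0$, $\alpha\in(0,1)$ and a nonnegative progressively measurable process $(f_t)\in L^1([0,T]\times\Omega)$ such that ${\rm d}P\times{\rm d}t$-a.e., $|g(\omega,t,y,z)|\le f_t(\omega)+C(|y|+|z|^\alpha)$ for all $(y,z)$. For $n\ge1$ define $g_n(\omega,t,y,z):=\inf_{(u,v)\in\mathbb{Q}^{1+d}}\{g(\omega,t,u,v)+nC(|y-u|+|z-v|^\alpha)\}$, with $C,\alpha$ from (H5). Then: (i) for each $n\ge1$, $g_n$ maps $\Omega\times[0,T]\times\mathbb{R}\times\mathbb{R}^d$ into $\mathbb{R}$, and for each $(y,z)$, $g_n(\cdot,\cdot,y,z)$ is $(\mathcal{F}_t)$-progressively measurable; (ii) for each $n\ge1$ and each $(y,z)$, ${\rm d}P\times{\rm d}t$-a.e., $g_n(\omega,t,y,z)\le g_{n+1}(\omega,t,y,z)\le g(\omega,t,y,z)$ and $|g_n(\omega,t,y,z)|\le f_t(\omega)+C(|y|+|z|^\alpha)$; (iii) for each $y_1,y_2,z_1,z_2$, ${\rm d}P\times{\rm d}t$-a.e., $|g_n(\omega,t,y_1,z_1)-g_n(\omega,t,y_2,z_2)|\le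 nC(|y_1-y_2|+|z_1-z_2|^\alpha)$; (iv) if $(y_n,z_n)\to(y_0^-,z_0)$ as $n\to\infty$, then $\lim_{n\to\infty}g_n(\omega,t,y_n,z_n)=g(\omega,t,y_0,z_0)$ ${\rm d}P\times{\rm d}t$-a.e.
   Context: $T>0$, $d\ge1$; $(\Omega,\mathcal{F},P)$ complete probability space with standard $d$-dimensional Brownian motion and augmented natural filtration $(\mathcal{F}_t)$. A generator is a map $g:\Omega\times[0,T]\times\mathbb{R}\times\mathbb{R}^d\to\mathbb{R}$, $(\mathcal{F}_t)$-progressively measurable for each $(y,z)$. The notation $(y,z)\to(y_0^-,z_0)$ (resp. $(y_0^+,z_0)$) means $y\to y_0$ with $y<y_0$ (resp. $y>y_0$) and $z\to z_0$. *)

(* Defs.v *)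
From HB Require Import structures.
From mathcomp Require Import all_boot all_order all_algebra.
From mathcomp Require Import all_classical all_reals all_analysis.
Import Order.TTheory GRing.Theory Num.Theory.
Import numFieldNormedType.Exports.
Local Open Scope classical_set_scope.
Local Open Scope ring_scope.

Set Implicit Arguments.
Unset Strict Implicit.
Unset Printing Implicit Defensive.

Section Defs.
Context {R : realType} {d0 : measure_display} {Om : measurableType d0}.

Definition is_filtration (F : R -> set (set Om)) : Prop :=
  (forall t, sigma_algebra setT (F t)) /\
  (forall t, F t `<=` measurable) /\
  (forall s t, s <= t -> F s `<=` F t).

(* Rectangles A x E with A a Borel subset of [0,t] and E in F_t;
   they generate B([0,t]) (x) F_t (on [0,t] x Om). *)
Definition prog_rect (F : R -> set (set Om)) (t : R) : set (set (R * Om)) :=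
  [set C | exists A E, measurable A /\ A `<=` `[0, t] /\ F t E /\ C = A `*` E].

Definition progressive (F : R -> set (set Om)) (T : R) (X : Om -> R -> R) : Prop :=
  forall t, 0 <= t <= T -> forall B : set R, measurable B ->
    <<s prog_rect F t >> [set p : R * Om | 0 <= p.1 <= t /\ B (X p.2 p.1)].

Definition ae_PdT (P : probability Om R) (T : R) (Q : Om -> R -> Prop) : Prop :=
  {ae (P \x (@lebesgue_measure R))%E, forall p : Om * R, 0 <= p.2 <= T -> Q p.1 p.2}.

Definition enorm (d : nat) (z : 'rV[R]_d) : R := Num.sqrt (\sum_(i < d) z ord0 i ^+ 2).

Definition Qset : set R := [set u | exists q : rat, u = ratr q].
Definition Qrow (d : nat) : set 'rV[R]_d :=
  [set v | forall i, exists q : rat, v ord0 i = ratr q].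

Definition gn_inf (d : nat) (g : Om -> R -> R -> 'rV[R]_d -> R) (C alpha : R)
    (n : nat) (w : Om) (t y : R) (z : 'rV[R]_d) : \bar R :=
  ereal_inf [set x | exists u v, Qset u /\ Qrow v /\
     x = (g w t u v + n%:R * C * (`|y - u| + enorm (z - v) `^ alpha))%:E].

(* g_n as a real-valued map (the infimum, read as a real number; it is
   finite dP x dt-a.e., see statement (i)). *)
Definition gn (d : nat) (g : Om -> R -> R -> 'rV[R]_d -> R) (C alpha : R)
    (n : nat) (w : Om) (t y : R) (z : 'rV[R]_d) : R :=
  fine (gn_inf g C alpha n w t y z).

End Defs.

(* Main.v *)
Require Import Defs.
From HB Require Import structures.
From mathcomp Require Import all_boot all_order all_algebra.
From mathcomp Require Import all_classical all_reals all_analysis.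
Import Order.TTheory GRing.Theory Num.Theory.
Import numFieldNormedType.Exports.
Local Open Scope classical_set_scope.
Local Open Scope ring_scope.
From mathcomp Require Import ring lra.
Set Implicit Arguments. Unset Strict Implicit.
Lemma powR_subadd (R : realType) (a b al : R) : 0 < al <= 1 -> 0 <= a -> 0 <= b ->
  (a + b) `^ al <= a `^ al + b `^ al.
Proof.
move=> /andP[al0 al1] a0 b0.
have [->|an0] := eqVneq a 0; first by rewrite add0r powR0 ?gt_eqF// add0r.
have [->|bn0] := eqVneq b 0; first by rewrite addr0 powR0 ?gt_eqF// addr0.
have ap : 0 < a by rewrite lt_neqAle eq_sym an0.
have bp : 0 < b by rewrite lt_neqAle eq_sym bn0.
set s := a + b.
have sp : 0 < s by rewrite addr_gt0.
have ha : s `^ al * (a / s) <= a `^ al.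
  have -> : a = s * (a / s) by rewrite mulrC divfK ?gt_eqF.
  rewrite -/s powRM ?(ltW sp) ?divr_ge0 ?(ltW sp)//.
  rewrite [X in _ * (X / s)]mulrC divfK ?gt_eqF//.
  rewrite ler_wpM2l ?powR_ge0// ger1_powR// divr_gt0//= ler_pdivrMr// mul1r lerDl//.
have hb : s `^ al * (b / s) <= b `^ al.
  have -> : b = s * (b / s) by rewrite mulrC divfK ?gt_eqF.
  rewrite -/s powRM ?(ltW sp) ?divr_ge0 ?(ltW sp)//.
  rewrite [X in _ * (X / s)]mulrC divfK ?gt_eqF//.
  rewrite ler_wpM2l ?powR_ge0// ger1_powR// divr_gt0//= ler_pdivrMr// mul1r lerDr//.
apply: le_trans (lerD ha hb).
by rewrite -mulrDr -mulrDl divff ?gt_eqF// mulr1.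
Qed.
Lemma cs_sum (R : realType) (d : nat) (a b : 'I_d -> R) :
  \sum_i a i * b i <= Num.sqrt (\sum_i a i ^+ 2) * Num.sqrt (\sum_i b i ^+ 2).
Proof.
set A := \sum_i a i ^+ 2; set B := \sum_i b i ^+ 2.
have A0 : 0 <= A by apply: sumr_ge0 => i _; rewrite sqr_ge0.
have B0 : 0 <= B by apply: sumr_ge0 => i _; rewrite sqr_ge0.
have [Az|Anz] := eqVneq A 0.
  rewrite big1 ?mulr_ge0 ?sqrtr_ge0// => i _.
  have := @psumr_eq0P _ _ xpredT (fun i => a i ^+ 2) (fun i _ => sqr_ge0 (a i)) Az i isT.
  by move/eqP; rewrite sqrf_eq0 => /eqP ->; rewrite mul0r.
have [Bz|Bnz] := eqVneq B 0.
  rewrite big1 ?mulr_ge0 ?sqrtr_ge0// => i _.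
  have := @psumr_eq0P _ _ xpredT (fun i => b i ^+ 2) (fun i _ => sqr_ge0 (b i)) Bz i isT.
  by move/eqP; rewrite sqrf_eq0 => /eqP ->; rewrite mulr0.
set sA := Num.sqrt A; set sB := Num.sqrt B.
have sAp : 0 < sA by rewrite sqrtr_gt0 lt_neqAle eq_sym Anz.
have sBp : 0 < sB by rewrite sqrtr_gt0 lt_neqAle eq_sym Bnz.
have eA : sA ^+ 2 = A by rewrite sqr_sqrtr.
have eB : sB ^+ 2 = B by rewrite sqr_sqrtr.
have key : forall i, a i * b i <= (sB / sA * a i ^+ 2 + sA / sB * b i ^+ 2) / 2.
  move=> i; set k := sB / sA.
  have kp : 0 < k by rewrite divr_gt0.
  have -> : sA / sB = k^-1 by rewrite invf_div.
  have h0 : 0 <= k^-1 * (k * a i - b i) ^+ 2 by rewrite mulr_ge0 ?sqr_ge0// invr_ge0 ltW.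
  have h1 : k^-1 * (k * a i - b i) ^+ 2 = k * a i ^+ 2 - 2 * (a i * b i) + k^-1 * b i ^+ 2.
    by field; rewrite gt_eqF.
  lra.
apply: (le_trans (ler_sum _ (fun i _ => key i))).
rewrite -mulr_suml big_split /= -!mulr_sumr -/A -/B -eA -eB.
rewrite expr2 expr2 !mulrA divfK ?gt_eqF// [sA / sB * sB]divfK ?gt_eqF//.
by rewrite [sB * sA]mulrC; lra.
Qed.
Lemma enorm_ge0 (R : realType) d (x : 'rV[R]_d) : 0 <= enorm x.
Proof. exact: sqrtr_ge0. Qed.

Lemma enormN (R : realType) d (x : 'rV[R]_d) : enorm (- x) = enorm x.
Proof. by rewrite /enorm; congr Num.sqrt; apply: eq_bigr => i _; rewrite mxE sqrrN. Qed.

Lemma enormB (R : realType) d (x y : 'rV[R]_d) : enorm (x - y) = enorm (y - x).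
Proof. by rewrite -enormN opprB. Qed.

Lemma coord_le_enorm (R : realType) d (x : 'rV[R]_d) j : `|x ord0 j| <= enorm x.
Proof.
rewrite /enorm -sqrtr_sqr ler_sqrt; last by apply: sumr_ge0 => i _; rewrite sqr_ge0.
rewrite (bigD1 j)//= lerDl; apply: sumr_ge0 => i _; exact: sqr_ge0.
Qed.

Lemma enorm_le_coord (R : realType) d (x : 'rV[R]_d) k : 0 <= k ->
  (forall j, `|x ord0 j| <= k) -> enorm x <= d%:R * k.
Proof.
move=> k0 hk; rewrite /enorm -(ger0_norm (mulr_ge0 (ler0n _ d) k0)) -sqrtr_sqr ler_sqrt ?sqr_ge0//.
apply: (@le_trans _ _ (\sum_(i < d) k ^+ 2)).
  apply: ler_sum => i _; rewrite -[x ord0 i ^+ 2]real_normK ?num_real//.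
  by rewrite lerXn2r// ?nnegrE.
rewrite sumr_const card_ord exprMn -[k ^+ 2 *+ d]mulr_natl ler_wpM2r ?sqr_ge0//.
case: d {x hk} => [|n]; first by rewrite expr2 mulr0.
by rewrite expr2 ler_peMl// ler1n.
Qed.
Lemma enormD (R : realType) d (x y : 'rV[R]_d) : enorm (x + y) <= enorm x + enorm y.
Proof.
rewrite /enorm.
set A := \sum_i x ord0 i ^+ 2; set B := \sum_i y ord0 i ^+ 2.
have A0 : 0 <= A by apply: sumr_ge0 => i _; rewrite sqr_ge0.
have B0 : 0 <= B by apply: sumr_ge0 => i _; rewrite sqr_ge0.
rewrite -(ger0_norm (addr_ge0 (sqrtr_ge0 A) (sqrtr_ge0 B))) -sqrtr_sqr ler_sqrt ?sqr_ge0//.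
have -> : \sum_i (x + y) ord0 i ^+ 2 = A + 2 * \sum_i x ord0 i * y ord0 i + B.
  rewrite mulr_sumr -!big_split /=; apply: eq_bigr => i _; rewrite mxE; ring.
have := cs_sum (fun i => x ord0 i) (fun i => y ord0 i).
rewrite -/A -/B sqrrD !sqr_sqrtr//; lra.
Qed.

Lemma enorm_tri (R : realType) d (x y z : 'rV[R]_d) : enorm (x - z) <= enorm (x - y) + enorm (y - z).
Proof. by apply: le_trans (enormD _ _); rewrite addrA subrK. Qed.

Lemma enorm_tri_pow (R : realType) d (x y z : 'rV[R]_d) al : 0 < al <= 1 ->
  enorm (x - z) `^ al <= enorm (x - y) `^ al + enorm (y - z) `^ al.
Proof.
move=> hal; apply: le_trans (powR_subadd hal (enorm_ge0 _) (enorm_ge0 _)).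
apply: ge0_ler_powR; rewrite ?nnegrE ?addr_ge0 ?enorm_ge0 ?enorm_tri//.
by case/andP: hal => /ltW.
Qed.

Lemma norm_le_enorm (R : realType) d (x : 'rV[R]_d) : `|x| <= enorm x.
Proof.
rewrite [`|x|]mx_normrE; apply: bigmax_le; first exact: enorm_ge0.
by case=> i j _ /=; rewrite (ord1 i); exact: coord_le_enorm.
Qed.
Lemma dens (R : realType) d (y : R) (z : 'rV[R]_d) (k : R) : (0 < d)%N -> 0 < k ->
  exists u v, Qset u /\ Qrow v /\ y - k < u < y /\ enorm (z - v) < k.
Proof.
move=> d0 k0.
have [q /itvP hq] := @rat_in_itvoo R (y - k) y ltac:(by rewrite ltrBlDr ltrDl).
set e := k / (2 * d%:R).
have e0 : 0 < e by rewrite divr_gt0// mulr_gt0// ltr0n.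
have : forall i : 'I_d, exists q : rat, z ord0 i - e < ratr q < z ord0 i + e.
  move=> i; have [r /itvP hr] := @rat_in_itvoo R (z ord0 i - e) (z ord0 i + e) ltac:(by rewrite ltrD2l gtrN).
  by exists r; rewrite !hr.
case/choice => f hf.
exists (ratr q), (\row_i ratr (f i)); split; first by exists q.
split; first by move=> i; exists (f i); rewrite mxE.
split; first by rewrite !hq.
apply: le_lt_trans (enorm_le_coord (ltW e0) _) _.
  move=> j; rewrite !mxE ler_distl; have := hf j; case/andP => h1 h2.
  apply/andP; split; lra.
have dp : 0 < d%:R :> R by rewrite ltr0n.
have -> : d%:R * e = k / 2 by rewrite /e; field; rewrite gt_eqF.
lra.
Qed.
Definition H5p (R : realType) d (G : R -> 'rV[R]_d -> R) (phi C al : R) :=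
  forall y z, `|G y z| <= phi + C * (`|y| + enorm z `^ al).

Lemma core_lb (R : realType) d (G : R -> 'rV[R]_d -> R) phi C al y z u v :
  0 < C -> 0 < al <= 1 -> H5p G phi C al ->
  - (phi + C * (`|y| + enorm z `^ al)) - C * (`|y - u| + enorm (z - v) `^ al) <= G u v.
Proof.
move=> C0 hal H; have := H u v; rewrite ler_norml => /andP[h _].
have hu : `|u| <= `|y| + `|y - u| by have := ler_normB y (y - u); rewrite opprB addrC subrK.
have hv : enorm v `^ al <= enorm z `^ al + enorm (z - v) `^ al.
  have := enorm_tri_pow v z 0 hal; rewrite !subr0 (enormB v z) addrC //.
have : C * (`|u| + enorm v `^ al) <= C * (`|y| + `|y - u| + (enorm z `^ al + enorm (z - v) `^ al)).
  by rewrite ler_wpM2l ?(ltW C0)// lerD.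
lra.
Qed.

Lemma gn_fin (R : realType) d d0 (Om : measurableType d0) (g : Om -> R -> R -> 'rV[R]_d -> R)
  phi C al n w t y z : (0 < n)%N -> 0 < C -> 0 < al <= 1 -> H5p (g w t) phi C al ->
  gn_inf g C al n w t y z \is a fin_num.
Proof.
move=> n0 C0 hal H; apply/fin_numP; split.
  rewrite -ltNye; apply: (@lt_le_trans _ _ (- (phi + C * (`|y| + enorm z `^ al)) - 1)%:E).
    by rewrite ltNye.
  apply: le_ereal_inf_tmp => _ [u [v [_ [_ ->]]]]; rewrite lee_fin.
  have := core_lb y z u v C0 hal H.
  have : C * (`|y - u| + enorm (z - v) `^ al) <= n%:R * C * (`|y - u| + enorm (z - v) `^ al).
    rewrite -mulrA ler_peMl ?mulr_ge0 ?addr_ge0 ?powR_ge0 ?(ltW C0)// ler1n//.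
  lra.
rewrite -ltey; apply: (@le_lt_trans _ _ (g w t 0 0 + n%:R * C * (`|y - 0| + enorm (z - 0) `^ al))%:E); last by rewrite ltey.
apply: ereal_inf_lbound; exists 0, 0; split; first by exists 0%Q; rewrite rmorph0.
by split => // i; exists 0%Q; rewrite rmorph0 mxE.
Qed.
Lemma gn_le (R : realType) d d0 (Om : measurableType d0) (g : Om -> R -> R -> 'rV[R]_d -> R)
  C al n w t y z u v : gn_inf g C al n w t y z \is a fin_num -> Qset u -> Qrow v ->
  gn g C al n w t y z <= g w t u v + n%:R * C * (`|y - u| + enorm (z - v) `^ al).
Proof.
move=> hf hu hv; rewrite -lee_fin /gn fineK//.
by apply: ereal_inf_lbound; exists u, v.
Qed.

Lemma gn_ge (R : realType) d d0 (Om : measurableType d0) (g : Om -> R -> R -> 'rV[R]_d -> R)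
  C al n w t y z c : gn_inf g C al n w t y z \is a fin_num ->
  (forall u v, Qset u -> Qrow v -> c <= g w t u v + n%:R * C * (`|y - u| + enorm (z - v) `^ al)) ->
  c <= gn g C al n w t y z.
Proof.
move=> hf H; rewrite -lee_fin /gn fineK//.
by apply: le_ereal_inf_tmp => _ [u [v [hu [hv ->]]]]; rewrite lee_fin H.
Qed.

Lemma pen_small (R : realType) (n : nat) (C al e : R) : 0 < C -> 0 < al -> 0 < e ->
  exists2 k, 0 < k & forall a b, 0 <= a -> 0 <= b -> a <= k -> b <= k ->
    n%:R * C * (a + b `^ al) <= e.
Proof.
move=> C0 al0 e0.
set eta := e / (2 * (n.+1%:R * C)).
have eta0 : 0 < eta by rewrite divr_gt0// mulr_gt0// mulr_gt0// ltr0n.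
exists (Num.min eta (eta `^ al^-1)); first by rewrite lt_min eta0 powR_gt0.
move=> a b a0 b0; rewrite !le_min => /andP[ha _] /andP[_ hb].
have hb' : b `^ al <= eta.
  apply: le_trans (ge0_ler_powR (ltW al0) _ _ hb) _; rewrite ?nnegrE ?powR_ge0//.
  by rewrite -powRrM mulVf ?gt_eqF// powRr1// ltW.
have : n%:R * C * (a + b `^ al) <= n.+1%:R * C * (2 * eta).
  apply: ler_pM; rewrite ?mulr_ge0 ?addr_ge0 ?powR_ge0 ?(ltW C0)//.
    by rewrite ler_wpM2r ?(ltW C0)// ler_nat.
  lra.
have -> : n.+1%:R * C * (2 * eta) = e.
  rewrite /eta; field.
  by rewrite gt_eqF//= -natr1 addrC paddr_eq0 ?oner_eq0// ler0n.
done.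
Qed.
Lemma left_box (R : realType) d (P : R * 'rV[R]_d -> Prop) (y0 : R) (z0 : 'rV[R]_d) :
  (\forall p \near filter_prod y0^'- (nbhs z0), P p) ->
  exists2 e, 0 < e & forall u v, y0 - e < u -> u < y0 -> `|z0 - v| < e -> P (u, v).
Proof.
case=> [[A B]] /= [hA hB] hAB.
move: hA => /nbhs_ballP [e1 e10 he1].
move: hB => /nbhs_ballP [e2 e20 he2].
exists (Num.min e1 e2); first by rewrite lt_min e10.
move=> u v h1 h2 h3.
have m1 : Num.min e1 e2 <= e1 by rewrite ge_min lexx.
have m2 : Num.min e1 e2 <= e2 by rewrite ge_min lexx orbT.
apply: hAB; split => /=.
  apply: he1 => //; rewrite /ball /= ger0_norm ?subr_ge0 ?ltW//.
  lra.
apply: he2; rewrite -ball_normE /ball_ /=.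
lra.
Qed.

Lemma right_box (R : realType) d (P : R * 'rV[R]_d -> Prop) (y0 : R) (z0 : 'rV[R]_d) :
  (\forall p \near filter_prod y0^'+ (nbhs z0), P p) ->
  exists2 e, 0 < e & forall u v, y0 < u -> u < y0 + e -> `|z0 - v| < e -> P (u, v).
Proof.
case=> [[A B]] /= [hA hB] hAB.
move: hA => /nbhs_ballP [e1 e10 he1].
move: hB => /nbhs_ballP [e2 e20 he2].
exists (Num.min e1 e2); first by rewrite lt_min e10.
move=> u v h1 h2 h3.
have m1 : Num.min e1 e2 <= e1 by rewrite ge_min lexx.
have m2 : Num.min e1 e2 <= e2 by rewrite ge_min lexx orbT.
apply: hAB; split => /=.
  apply: he1 => //; rewrite /ball /= distrC ger0_norm ?subr_ge0 ?ltW//.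
  lra.
apply: he2; rewrite -ball_normE /ball_ /=.
lra.
Qed.
Definition A1p (R : realType) d (G : R -> 'rV[R]_d -> R) := forall (y0 : R) (z0 : 'rV[R]_d),
  (fun p => G p.1 p.2) @ filter_prod y0^'- (nbhs z0) --> G y0 z0.
Definition A2p (R : realType) d (G : R -> 'rV[R]_d -> R) (y0 : R) (z0 : 'rV[R]_d) :=
  ((G y0 z0)%:E <= limf_einf (fun p => (G p.1 p.2)%:E) (filter_prod y0^'+ (nbhs z0)))%E.

Lemma left_cont (R : realType) d (G : R -> 'rV[R]_d -> R) y0 z0 e : A1p G -> 0 < e ->
  exists2 δ, 0 < δ & forall u v, y0 - δ < u -> u < y0 -> `|z0 - v| < δ -> `|G y0 z0 - G u v| < e.
Proof.
move=> A1 e0; have := A1 y0 z0; move/cvgrPdist_lt => /(_ e e0).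
move/left_box => [δ δ0 H]; exists δ => // u v h1 h2 h3; exact: (H u v h1 h2 h3).
Qed.

Lemma right_lsc (R : realType) d (G : R -> 'rV[R]_d -> R) y0 z0 e : A2p G y0 z0 -> 0 < e ->
  exists2 δ, 0 < δ & forall u v, y0 < u -> u < y0 + δ -> `|z0 - v| < δ -> G y0 z0 - e < G u v.
Proof.
move=> A2 e0; move: A2; rewrite /A2p limf_einfE => A2.
have : ((G y0 z0 - e)%:E < ereal_sup [set ereal_inf ((fun p => (G p.1 p.2)%:E) @` V) | V in filter_prod y0^'+ (nbhs z0)])%E.
  by apply: lt_le_trans A2; rewrite lte_fin ltrBlDr ltrDl.
case/ereal_sup_gt => _ [V FV <-] hV.
have : \forall p \near filter_prod y0^'+ (nbhs z0), G y0 z0 - e < G p.1 p.2.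
  apply: filterS FV => p Vp; rewrite -lte_fin; apply: lt_le_trans hV _.
  by apply: ereal_inf_lbound; exists p.
move/right_box => [δ δ0 H]; exists δ => // u v h1 h2 h3; exact: (H u v h1 h2 h3).
Qed.
Lemma lsc (R : realType) d (G : R -> 'rV[R]_d -> R) y0 z0 e : A1p G -> A2p G y0 z0 -> 0 < e ->
  exists2 δ, 0 < δ & forall u v, `|u - y0| < δ -> `|z0 - v| < δ -> G y0 z0 - e <= G u v.
Proof.
move=> A1 A2 e0.
have [δ1 δ10 H1] := left_cont y0 z0 A1 e0.
have [δ2 δ20 H2] := right_lsc A2 e0.
exists (Num.min δ1 δ2); first by rewrite lt_min δ10.
have m1 : Num.min δ1 δ2 <= δ1 by rewrite ge_min lexx.
have m2 : Num.min δ1 δ2 <= δ2 by rewrite ge_min lexx orbT.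
move=> u v hu hv.
case: (ltgtP u y0) => [uy|uy|->].
- have := H1 u v; rewrite ltr_distlC.
  move: hu; rewrite ltr_distlC => /andP[hu1 hu2].
  have : `|z0 - v| < δ1 by lra.
  have : y0 - δ1 < u by lra.
  move=> a b /(_ a uy b) /andP[c _]; lra.
- move: hu; rewrite ltr_distlC => /andP[hu1 hu2].
  have := H2 u v uy; lra.
- apply/ler_addgt0Pr => η η0.
  have [δ3 δ30 H3] := left_cont y0 v A1 η0.
  set u' := y0 - Num.min δ1 δ3 / 2.
  have mm : 0 < Num.min δ1 δ3 by rewrite lt_min δ10.
  have n1 : Num.min δ1 δ3 <= δ1 by rewrite ge_min lexx.
  have n3 : Num.min δ1 δ3 <= δ3 by rewrite ge_min lexx orbT.
  have a1 : y0 - δ1 < u' by rewrite /u'; lra.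
  have a3 : y0 - δ3 < u' by rewrite /u'; lra.
  have a2 : u' < y0 by rewrite /u'; lra.
  have := H3 u' v a3 a2; rewrite subrr normr0 => /(_ δ30); rewrite ltr_distlC => /andP[c1 c2].
  have := H1 u' v a1 a2; rewrite ltr_distlC.
  have : `|z0 - v| < δ1 by lra.
  move=> b /(_ b) /andP[c3 _]; lra.
Qed.
Lemma det_mono (R : realType) d d0 (Om : measurableType d0) (g : Om -> R -> R -> 'rV[R]_d -> R)
  phi C al n w t y z : (0 < n)%N -> 0 < C -> 0 < al <= 1 -> H5p (g w t) phi C al ->
  gn g C al n w t y z <= gn g C al n.+1 w t y z.
Proof.
move=> n0 C0 hal H.
have f1 := gn_fin y z n0 C0 hal H.
have f2 := @gn_fin _ _ _ _ g phi C al n.+1 w t y z isT C0 hal H.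
apply: gn_ge => // u v hu hv.
apply: le_trans (gn_le f1 hu hv) _; rewrite lerD2l.
by rewrite ler_wpM2r ?addr_ge0 ?powR_ge0// ler_wpM2r ?(ltW C0)// ler_nat.
Qed.

Lemma det_le_g (R : realType) d d0 (Om : measurableType d0) (g : Om -> R -> R -> 'rV[R]_d -> R)
  phi C al n w t y z : (0 < d)%N -> (0 < n)%N -> 0 < C -> 0 < al <= 1 -> H5p (g w t) phi C al ->
  A1p (g w t) -> gn g C al n w t y z <= g w t y z.
Proof.
move=> d0' n0 C0 hal H A1.
have f1 := gn_fin y z n0 C0 hal H.
have al0 : 0 < al by case/andP: hal.
apply/ler_addgt0Pr => e e0.
have e20 : 0 < e / 2 by rewrite divr_gt0.
have [δ δ0 Hδ] := left_cont y z A1 e20.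
have [κ κ0 Hκ] := @pen_small R n C al (e / 2) C0 al0 e20.
have mk : 0 < Num.min δ κ by rewrite lt_min δ0.
have m1 : Num.min δ κ <= δ by rewrite ge_min lexx.
have m2 : Num.min δ κ <= κ by rewrite ge_min lexx orbT.
have [u [v [hu [hv [/andP[u1 u2] hzv]]]]] := dens y z d0' mk.
apply: le_trans (gn_le f1 hu hv) _.
have hp := Hκ `|y - u| (enorm (z - v)) (normr_ge0 _) (enorm_ge0 _).
have ha : `|y - u| <= κ by rewrite ger0_norm; lra.
have hb : enorm (z - v) <= κ by lra.
have := hp ha hb.
have := norm_le_enorm (z - v).
have := Hδ u v; rewrite ltr_distlC => hG.
have : y - δ < u by lra.
move=> a b c; have := hG a u2; lra.
Qed.
Lemma det_bound (R : realType) d d0 (Om : measurableType d0) (g : Om -> R -> R -> 'rV[R]_d -> R)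
  phi C al n w t y z : (0 < d)%N -> (0 < n)%N -> 0 < C -> 0 < al <= 1 -> H5p (g w t) phi C al ->
  A1p (g w t) -> `|gn g C al n w t y z| <= phi + C * (`|y| + enorm z `^ al).
Proof.
move=> d0' n0 C0 hal H A1.
have f1 := gn_fin y z n0 C0 hal H.
rewrite ler_norml; apply/andP; split.
  apply: gn_ge => // u v _ _.
  have := core_lb y z u v C0 hal H.
  have : C * (`|y - u| + enorm (z - v) `^ al) <= n%:R * C * (`|y - u| + enorm (z - v) `^ al).
    rewrite -mulrA ler_peMl ?mulr_ge0 ?addr_ge0 ?powR_ge0 ?(ltW C0)// ler1n//.
  lra.
apply: le_trans (det_le_g _ _ d0' n0 C0 hal H A1) _.
by have := H y z; rewrite ler_norml => /andP[].
Qed.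

Lemma lip1 (R : realType) d d0 (Om : measurableType d0) (g : Om -> R -> R -> 'rV[R]_d -> R)
  phi C al n w t y1 y2 z1 z2 : (0 < n)%N -> 0 < C -> 0 < al <= 1 -> H5p (g w t) phi C al ->
  gn g C al n w t y1 z1 - n%:R * C * (`|y1 - y2| + enorm (z1 - z2) `^ al) <= gn g C al n w t y2 z2.
Proof.
move=> n0 C0 hal H.
have f1 := gn_fin y1 z1 n0 C0 hal H.
have f2 := gn_fin y2 z2 n0 C0 hal H.
apply: gn_ge => // u v hu hv.
have h1 := gn_le f1 hu hv.
have a := ler_distD y2 y1 u; have b := enorm_tri_pow z1 z2 v hal.
have nC : 0 <= n%:R * C by rewrite mulr_ge0 ?(ltW C0).
have : n%:R * C * (`|y1 - u| + enorm (z1 - v) `^ al) <=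
  n%:R * C * (`|y1 - y2| + enorm (z1 - z2) `^ al) + n%:R * C * (`|y2 - u| + enorm (z2 - v) `^ al).
  by rewrite -mulrDr ler_wpM2l // addrACA; apply: lerD.
move=> h; rewrite lerBlDr; apply: le_trans h1 _.
by rewrite -addrA lerD2l addrC.
Qed.


Lemma det_lip (R : realType) d d0 (Om : measurableType d0) (g : Om -> R -> R -> 'rV[R]_d -> R)
  phi C al n w t y1 y2 z1 z2 : (0 < n)%N -> 0 < C -> 0 < al <= 1 -> H5p (g w t) phi C al ->
  `|gn g C al n w t y1 z1 - gn g C al n w t y2 z2| <= n%:R * C * (`|y1 - y2| + enorm (z1 - z2) `^ al).
Proof.
move=> n0 C0 hal H.
have h1 := lip1 y1 y2 z1 z2 n0 C0 hal H; have h2 := lip1 y2 y1 z2 z1 n0 C0 hal H.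
rewrite distrC (enormB z2 z1) in h2.
rewrite ler_distl; apply/andP; split.
  exact: h2.
by move: h1; rewrite lerBlDr.
Qed.
Lemma coord_le_norm (R : realType) d (x : 'rV[R]_d) j : `|x ord0 j| <= `|x|.
Proof. by rewrite [`|x|]mx_normrE (le_bigmax _ (fun ij : 'I_1 * 'I_d => `|x ij.1 ij.2|) (ord0, j)). Qed.

Lemma enorm_le_dnorm (R : realType) d (x : 'rV[R]_d) : enorm x <= d%:R * `|x|.
Proof. by apply: enorm_le_coord => // j; exact: coord_le_norm. Qed.

Lemma det_upper (R : realType) d d0 (Om : measurableType d0) (g : Om -> R -> R -> 'rV[R]_d -> R)
  phi C al w t (ys : nat -> R) (zs : nat -> 'rV[R]_d) y0 z0 e :
  (0 < d)%N -> 0 < C -> 0 < al <= 1 -> H5p (g w t) phi C al -> A1p (g w t) ->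
  (forall n, ys n < y0) -> ys @ \oo --> y0 -> zs @ \oo --> z0 -> 0 < e ->
  \forall n \near \oo, gn g C al n.+1 w t (ys n) (zs n) <= g w t y0 z0 + e.
Proof.
move=> d0' C0 hal H A1 ylt ycv zcv e0.
have al0 : 0 < al by case/andP: hal.
pose e2 := e / 2.
have e20 : 0 < e2 by rewrite divr_gt0.
have ee : e = e2 + e2 by rewrite /e2 -splitr.
have [δ1 δ10 H1] := left_cont y0 z0 A1 e20.
pose h := δ1 / 2.
have h2 : 0 < h by rewrite divr_gt0.
have hh : δ1 = h + h by rewrite /h -splitr.
move/cvgrPdist_lt: ycv => /(_ _ h2) Ey.
move/cvgrPdist_lt: zcv => /(_ _ h2) Ez.
apply: filterS2 Ey Ez => n hy hz.
have f1 := @gn_fin _ _ _ _ g phi C al n.+1 w t (ys n) (zs n) isT C0 hal H.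
have [κ κ0 Hκ] := @pen_small R n.+1 C al e2 C0 al0 e20.
pose m := Num.min h κ.
have mk : 0 < m by rewrite lt_min h2.
have m1 : m <= h by rewrite ge_min lexx.
have m2 : m <= κ by rewrite ge_min lexx orbT.
have [u [v [hu [hv [/andP[u1 u2] hzv]]]]] := dens (ys n) (zs n) d0' mk.
have hle := gn_le f1 hu hv.
have ha : `|ys n - u| <= κ by rewrite ger0_norm; lra.
have hb : enorm (zs n - v) <= κ by lra.
have hp := Hκ _ _ (normr_ge0 _) (enorm_ge0 _) ha hb.
have c1 := ler_distD (zs n) z0 v.
have c2 := norm_le_enorm (zs n - v).
have yl := ylt n.
have hy' : y0 - ys n < h by move: hy; rewrite ger0_norm ?subr_ge0 ?ltW.
have a1 : y0 - δ1 < u by lra.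
have a2 : u < y0 by lra.
have a3 : `|z0 - v| < δ1 by lra.
have := H1 u v a1 a2 a3; rewrite ltr_distlC => /andP[_ hG].
lra.
Qed.
Lemma det_lower (R : realType) d d0 (Om : measurableType d0) (g : Om -> R -> R -> 'rV[R]_d -> R)
  phi C al w t (ys : nat -> R) (zs : nat -> 'rV[R]_d) y0 z0 e :
  (0 < d)%N -> 0 < C -> 0 < al <= 1 -> H5p (g w t) phi C al -> A1p (g w t) -> A2p (g w t) y0 z0 ->
  ys @ \oo --> y0 -> zs @ \oo --> z0 -> 0 < e ->
  \forall n \near \oo, g w t y0 z0 - e <= gn g C al n.+1 w t (ys n) (zs n).
Proof.
move=> d0' C0 hal H A1 A2 ycv zcv e0.
have al0 : 0 < al by case/andP: hal.

have [δ δ0 Hδ] := lsc A1 A2 e0.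
pose h := δ / 2.
have h2 : 0 < h by rewrite divr_gt0.
have hh : δ = h + h by rewrite /h -splitr.
pose r := Num.min h 1.
have r0 : 0 < r by rewrite lt_min h2 ltr01.
have r1 : r <= h by rewrite ge_min lexx.
have r2 : r <= 1 by rewrite ge_min lexx orbT.
move/cvgrPdist_lt: ycv => /(_ _ r0) Ey.
move/cvgrPdist_lt: zcv => /(_ _ r0) Ez.
pose m := Num.min h (h `^ al).
have m0 : 0 < m by rewrite lt_min h2 powR_gt0.
have mh1 : m <= h by rewrite ge_min lexx.
have mh2 : m <= h `^ al by rewrite ge_min lexx orbT.
pose G0 := g w t y0 z0.
pose Bm := phi + C * (`|y0| + 1 + (enorm z0 + d%:R) `^ al).
pose K := (Bm + `|G0|) / (C * m).
have Cm : 0 < C * m by rewrite mulr_gt0.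
apply: filterS2 (filterI Ey Ez) (nbhs_infty_gtr K) => n [hy hz] hn.
have f1 := @gn_fin _ _ _ _ g phi C al n.+1 w t (ys n) (zs n) isT C0 hal H.
apply: gn_ge => // u v _ _.
pose P := `|ys n - u| + enorm (zs n - v) `^ al.
have P0 : 0 <= P by rewrite addr_ge0 ?powR_ge0.
have pen0 : 0 <= n.+1%:R * C * P by rewrite !mulr_ge0 ?(ltW C0).
case: (boolP ((`|u - y0| < δ) && (`|z0 - v| < δ))) => [/andP[a b] | hfar].
  have := Hδ u v a b; rewrite -/P -/G0; lra.
have Pm : m <= P.
  move: hfar; rewrite negb_and -!leNgt => /orP[a|b].
    have c := ler_distD (ys n) u y0.
    rewrite (distrC u (ys n)) (distrC (ys n) y0) in c.
    have : h <= `|ys n - u| by lra.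
    have := powR_ge0 (enorm (zs n - v)) al.
    rewrite /P; lra.
  have c := ler_distD (zs n) z0 v.
  have c2 := norm_le_enorm (zs n - v).
  have : h <= enorm (zs n - v) by lra.
  move=> /(ge0_ler_powR (ltW al0)); rewrite !nnegrE enorm_ge0 (ltW h2) => /(_ isT isT) hp.
  rewrite /P; have := normr_ge0 (ys n - u); lra.
have cl := core_lb (ys n) (zs n) u v C0 hal H.
have hyn : `|ys n| <= `|y0| + 1.
  have := ler_normB y0 (y0 - ys n); rewrite opprB addrC subrK; lra.
have hzn0 : enorm (zs n) <= enorm z0 + d%:R.
  have := enorm_tri (zs n) z0 0; rewrite !subr0 => c.
  have := enorm_le_dnorm (zs n - z0); rewrite distrC in hz.
  have : d%:R * `|zs n - z0| <= d%:R * 1 by rewrite ler_wpM2l ?ler0n//; lra.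
  lra.
have hzn : enorm (zs n) `^ al <= (enorm z0 + d%:R) `^ al.
  by apply: ge0_ler_powR => //; rewrite ?nnegrE ?enorm_ge0 ?addr_ge0 ?enorm_ge0 ?ler0n// ltW.
have hB : C * (`|ys n| + enorm (zs n) `^ al) <= C * (`|y0| + 1 + (enorm z0 + d%:R) `^ al).
  by rewrite ler_wpM2l ?(ltW C0)//; apply: lerD.
have hK : Bm + `|G0| < n%:R * (C * m) by rewrite -ltr_pdivrMr.
have hnm : n%:R * (C * m) <= n%:R * C * P by rewrite -mulrA ler_wpM2l// ler_wpM2l// ltW.
have hS : n.+1%:R * C * P = n%:R * C * P + C * P by rewrite -natr1 !mulrDl mul1r.
have hG0 : G0 <= `|G0| := ler_norm G0.
rewrite /Bm in hK; rewrite -/P -/G0; rewrite -/P in cl.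
move: cl hB hK hnm hS hG0.
set X := C * (`|ys n| + _); set Y := C * (_ + _ + _); set Q := n%:R * C * P; set Q1 := n.+1%:R * C * P.
set Z := n%:R * (C * m); set CP := C * P.
move=> cl hB hK hnm hS hG0.
lra.
Qed.
From mathcomp Require Import measurable_realfun.
Lemma Qenum (R : realType) d : exists e : nat -> R * 'rV[R]_d,
  (forall k, Qset (e k).1 /\ Qrow (e k).2) /\
  (forall u v, Qset u -> Qrow v -> exists k, e k = (u, v)).
Proof.
pose e : nat -> R * 'rV[R]_d := fun k => match @unpickle (rat * 'rV[rat]_d)%type k with
  | Some qv => (ratr qv.1, map_mx (@ratr R) qv.2) | None => (0, 0) end.
exists e; split.
  move=> k; rewrite /e; case: (unpickle k) => [[q V]|] /=.
    by split; [exists q | move=> i; exists (V ord0 i); rewrite mxE].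
  by split; [exists 0%Q; rewrite rmorph0 | move=> i; exists 0%Q; rewrite rmorph0 mxE].
move=> u v [q ->] hv.
have [f hf] := choice hv.
exists (pickle (q, \row_i f i)); rewrite /e pickleK /=; congr pair.
by apply/rowP => i; rewrite !mxE hf.
Qed.

Lemma prog_D (R : realType) d0 (Om : measurableType d0) (F : R -> set (set Om)) t0 :
  is_filtration F ->
  <<s prog_rect F t0 >> [set p : R * Om | 0 <= p.1 <= t0].
Proof.
move=> [hs [hsub hmono]].
apply: sub_gen_smallest; exists `[0, t0]%classic, setT; split => //.
split; first by move=> x /=.
split; first by case: (hs t0) => h0 h1 _; have := h1 set0 h0; rewrite setD0.
by apply/seteqP; split => [p /= hp|p /= [hp _]]; [split => //; rewrite /= in_itv | rewrite /= in_itv in hp].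
Qed.

Lemma gn_prog (R : realType) d d0 (Om : measurableType d0) (F : R -> set (set Om)) (T : R)
  (g : Om -> R -> R -> 'rV[R]_d -> R) C al n y z :
  is_filtration F -> (forall y z, progressive F T (fun w t => g w t y z)) ->
  progressive F T (fun w t => gn g C al n w t y z).
Proof.
move=> hF hg t0 ht0 B mB.
pose U := g_sigma_algebraType (prog_rect F t0).
pose D : set U := [set p | 0 <= p.1 <= t0].
have mD : measurable D by exact: prog_D.
have key : forall X : Om -> R -> R, progressive F T X ->
    measurable_fun D (fun p : U => X p.2 p.1).
  by move=> X hX _ B' mB'; exact: hX t0 ht0 B' mB'.
have [e [he1 he2]] := @Qenum R d.
pose h : (U -> \bar R)^nat := fun k p =>
  (g p.2 p.1 (e k).1 (e k).2 + n%:R * C * (`|y - (e k).1| + enorm (z - (e k).2) `^ al))%:E.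
have mh : forall k, measurable_fun D (h k).
  move=> k; apply/measurable_EFinP; apply: measurable_funD.
    exact: (key (fun w t => g w t (e k).1 (e k).2) (hg _ _)).
  exact: measurable_cst.
have mI := measurable_fun_einfs mh 0.
suff : measurable_fun D (fun p : U => gn g C al n p.2 p.1 y z) by move/(_ mD B mB).
have -> : (fun p : U => gn g C al n p.2 p.1 y z) = fine \o (fun p => einfs (h^~ p) 0).
  apply/funext => p /=; rewrite /gn /gn_inf; congr fine.
  rewrite /einfs /=; congr ereal_inf; apply/seteqP; split.
    move=> x [u [v [hu [hv ->]]]]; have [k ek] := he2 u v hu hv.
    exists k; first by rewrite /= leq0n.
    by rewrite /h ek.
  by move=> _ [k _ <-]; exists (e k).1, (e k).2; have [? ?] := he1 k.
exact: (measurableT_comp (fine_measurable measurableT) mI).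
Qed.
Lemma ae_S2 (R : realType) d0 (Om : measurableType d0) (P : probability Om R) (T : R)
  (Q1 Q2 Q3 : Om -> R -> Prop) : ae_PdT P T Q1 -> ae_PdT P T Q2 ->
  (forall w t, Q1 w t -> Q2 w t -> Q3 w t) -> ae_PdT P T Q3.
Proof.
move=> h1 h2 H.
have FF := ae_filter_ringOfSetsType (P \x (@lebesgue_measure R))%E.
move: h1 h2; rewrite /ae_PdT => h1 h2.
apply: (filterS2 FF _ h1 h2) => p a b c; exact: H (a c) (b c).
Qed.

Lemma det_conv (R : realType) d d0 (Om : measurableType d0) (g : Om -> R -> R -> 'rV[R]_d -> R)
  phi C al w t (ys : nat -> R) (zs : nat -> 'rV[R]_d) y0 z0 :
  (0 < d)%N -> 0 < C -> 0 < al <= 1 -> H5p (g w t) phi C al -> A1p (g w t) -> A2p (g w t) y0 z0 ->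
  (forall n, ys n < y0) -> ys @ \oo --> y0 -> zs @ \oo --> z0 ->
  (fun n => gn g C al n.+1 w t (ys n) (zs n)) @ \oo --> g w t y0 z0.
Proof.
move=> d0' C0 hal H A1 A2 ylt ycv zcv.
apply/cvgrPdist_le => e e0.
apply: filterS2 (det_upper d0' C0 hal H A1 ylt ycv zcv e0) (det_lower d0' C0 hal H A1 A2 ycv zcv e0).
by move=> n a b; rewrite ler_distlC a b.
Qed.

Unset Implicit Arguments. Set Strict Implicit.

Theorem proposition2 (R : realType) (T : R) (d : nat) (d0 : measure_display)
  (Om : measurableType d0) (P : probability Om R) (F : R -> set (set Om))
  (g : Om -> R -> R -> 'rV[R]_d -> R) (f : Om -> R -> R) (C alpha : R) :
  0 < T -> (0 < d)%N -> is_filtration F ->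
  (* g is a generator *)
  (forall y z, progressive F T (fun w t => g w t y z)) ->
  (* (H1a) *)
  ae_PdT P T (fun w t => forall (y0 : R) (z0 : 'rV[R]_d),
     (fun p => g w t p.1 p.2) @ filter_prod y0^'- (nbhs z0) --> g w t y0 z0 /\
     ((g w t y0 z0)%:E <=
        limf_einf (fun p => (g w t p.1 p.2)%:E) (filter_prod y0^'+ (nbhs z0)))%E) ->
  (* (H5) *)
  0 < C -> 0 < alpha < 1 ->
  (forall w t, 0 <= f w t) -> progressive F T f ->
  (P \x (@lebesgue_measure R))%E.-integrable [set p | 0 <= p.2 <= T]
     (fun p => (f p.1 p.2)%:E) ->
  ae_PdT P T (fun w t => forall y z,
     `|g w t y z| <= f w t + C * (`|y| + enorm z `^ alpha)) ->
  (* (i) *)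
  (forall n : nat, (0 < n)%N ->
     (forall y z, progressive F T (fun w t => gn g C alpha n w t y z)) /\
     ae_PdT P T (fun w t => forall y z, gn_inf g C alpha n w t y z \is a fin_num))
  /\
  (* (ii) *)
  (forall n : nat, (0 < n)%N -> forall y z, ae_PdT P T (fun w t =>
     gn g C alpha n w t y z <= gn g C alpha n.+1 w t y z <= g w t y z /\
     `|gn g C alpha n w t y z| <= f w t + C * (`|y| + enorm z `^ alpha)))
  /\
  (* (iii) *)
  (forall n : nat, (0 < n)%N -> forall y1 y2 z1 z2, ae_PdT P T (fun w t =>
     `|gn g C alpha n w t y1 z1 - gn g C alpha n w t y2 z2|
       <= n%:R * C * (`|y1 - y2| + enorm (z1 - z2) `^ alpha)))
  /\
  (* (iv): the sequence (y_n, z_n)_{n >= 1} is (ys n, zs n) with index shift n+1 *)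
  (forall (ys : nat -> R) (zs : nat -> 'rV[R]_d) (y0 : R) (z0 : 'rV[R]_d),
     (forall n, ys n < y0) -> ys @ \oo --> y0 -> zs @ \oo --> z0 ->
     ae_PdT P T (fun w t =>
       (fun n => gn g C alpha n.+1 w t (ys n) (zs n)) @ \oo --> g w t y0 z0)).

Proof.
move=> T0 d0' hF hg h1a C0 /andP[al0 al1] f0 fp fint h5.
have hal : 0 < alpha <= 1 by rewrite al0 ltW.
split.
  move=> n n0; split; first by move=> y z; apply: gn_prog.
  by apply: (ae_S2 h1a h5) => w t _ H y z; exact: gn_fin.
split.
  move=> n n0 y z; apply: (ae_S2 h1a h5) => w t A H.
  have A1 : A1p (g w t) := fun y0 z0 => (A y0 z0).1.
  split; first by rewrite (det_mono _ _ n0 C0 hal H) (@det_le_g _ _ _ _ g (f w t) C alpha n.+1 w t y z d0' isT C0 hal H A1).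
  exact: (det_bound _ _ d0' n0 C0 hal H A1).
split.
  move=> n n0 y1 y2 z1 z2; apply: (ae_S2 h1a h5) => w t _ H.
  exact: (det_lip _ _ _ _ n0 C0 hal H).
move=> ys zs y0 z0 ylt ycv zcv; apply: (ae_S2 h1a h5) => w t A H.
have A1 : A1p (g w t) := fun y0 z0 => (A y0 z0).1.
exact: (det_conv d0' C0 hal H A1 (A y0 z0).2 ylt ycv zcv).
Qed.
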